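(* Let $\mathcal U$ be an unbalanced critical update family and $\mathcal S_U$ as in the context. There is a constant $c>0$ depending only on $\mathcal U$ such that for every $A\subset\mathbb Z^2$ and every $\mathcal S_U$-droplet $D$ internally spanned by $A$, $|D\cap A|\ge c\cdot\operatorname{diam}(D)$.
   Context: Update family $\mathcal U$: finite collection of finite subsets of $\mathbb Z^2\setminus\{0\}$, $A_{t+1}=A_t\cup\{x:x+X\subset A_t,\ X\in\mathcal U\}$, $[A]=\bigcup_tA_t$. $\mathbb H_u(a)=\{x\in\mathbb Z^2:\langle x-a,u\rangle<0\}$, $\mathbb H_u=\mathbb H_u(0)$. For rational $u$, $\alpha^\pm(u)$ is the minimal $|Z|$ with $[\mathbb H_u\cup Z]$ containing infinitely many sites of $\ell_u^\pm$ (origin plus sites of $\{x:\langle x,u\rangle=0\}$ right/left of origin looking in direction $u$); $\bar\alpha(u)=\min\{\alpha^+,\alpha^-\}$; $\alpha(u)=\bar\alpha(u)$ if both finite else $\infty$; $\alpha=\alpha(\mathcal U)=\min$ over open semicircles $C$ of $\sup_{u\in C}\alpha(u)$. Unbalanced critical: $1\le\alpha<\infty$ and no closed semicircle has $\alpha(u)\le\alpha$ throughout. $\mathcal S_U=\{u^*,-u^*,u^l,u^r\}$ is fixed with $u^l,u^r$ in opposite open semicircles separated by $\pm u^*$, $\min\{\alpha(u^* ),\alpha(-u^* )\}\ge\alpha+1$, $\min\{\bar\alpha(u^l),\bar\alpha(u^r)\}=\alpha$. An $\mathcal S_U$-droplet is a non-empty set $\bigcap_{u\in\mathcal S_U}\mathbb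 H_u(a_u)$, $a_u\in\mathbb Z^2$. $\nu=\max\{\|x-y\|:x,y\in X\cup\{0\},X\in\mathcal U\}$, $\kappa=3\nu$; strongly connected means connected in the graph on $\mathbb Z^2$ joining $x,y$ with $\|x-y\|_2\le\kappa$. $D$ is internally spanned by $A$ if some strongly connected $L\subset[D\cap A]$ has $D$ as the smallest $\mathcal S_U$-droplet containing $L$. $\operatorname{diam}(K)=\max\{\|x-y\|:x,y\in K\}$. *)

(* Defs.v *)
From Stdlib Require Import Reals Lra Lia ZArith Arith List Classical
  ClassicalEpsilon Wf_nat.
Import ListNotations.
Open Scope R_scope.

Lemma least_exists (P : nat -> Prop) :
  (exists n, P n) -> exists n, P n /\ forall m, P m -> (n <= m)%nat.
Proof.
  intros [n Hn]. revert Hn.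
  induction n as [n IH] using (well_founded_induction lt_wf). intro Hn.
  destruct (classic (exists m, (m < n)%nat /\ P m)) as [[m [Hm Pm]]|Hno].
  - exact (IH m Hm Pm).
  - exists n; split; [exact Hn|]. intros m Pm.
    destruct (le_lt_dec n m) as [h|h]; [exact h|].
    exfalso; apply Hno; eauto.
Qed.

Definition least (P : nat -> Prop) : option nat :=
  match excluded_middle_informative (exists n, P n) with
  | left H => Some (proj1_sig (constructive_indefinite_description _ (least_exists P H)))
  | right _ => None
  end.

(* extended naturals: option nat with None = +infinity *)
Definition ole (x y : option nat) : Prop :=
  match x, y with
  | _, None => True
  | None, Some _ => False
  | Some m, Some n => (m <= n)%nat
  end.

Definition omin (x y : option nat) : option nat :=
  match x, y with
  | None, _ => y
  | _, None => x
  | Some m, Some n => Some (Nat.min m n)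
  end.

Definition pt := (Z * Z)%type.
Definition padd (x y : pt) : pt := ((fst x + fst y)%Z, (snd x + snd y)%Z).
Definition psub (x y : pt) : pt := ((fst x - fst y)%Z, (snd x - snd y)%Z).

Definition dist2 (x y : pt) : R :=
  sqrt ((IZR (fst x) - IZR (fst y))^2 + (IZR (snd x) - IZR (snd y))^2).

Definition infinite_set (S : pt -> Prop) : Prop :=
  forall l : list pt, exists x, S x /\ ~ In x l.

(* cardinality of a finite set (None if S is infinite) *)
Definition card_set (S : pt -> Prop) : option nat :=
  least (fun k => exists l : list pt, NoDup l /\ length l = k /\
                                      forall x, In x l <-> S x).

(* an update family: a finite collection of finite subsets of Z^2 \ {0} *)
Definition update_family := list (list pt).

Definition is_update_family (U : update_family) : Prop :=
  forall X, In X U -> forall x, In x X -> x <> (0%Z, 0%Z).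

Fixpoint iterA (U : update_family) (A : pt -> Prop) (t : nat) : pt -> Prop :=
  match t with
  | O => A
  | S t' => fun x => iterA U A t' x \/
              exists X, In X U /\ forall y, In y X -> iterA U A t' (padd x y)
  end.

Definition closure (U : update_family) (A : pt -> Prop) : pt -> Prop :=
  fun x => exists t, iterA U A t x.

Definition vec := (R * R)%type.
Definition unit_vec (u : vec) : Prop := (fst u)^2 + (snd u)^2 = 1.
Definition vneg (u : vec) : vec := (- fst u, - snd u).
Definition dotR (u v : vec) : R := fst u * fst v + snd u * snd v.
Definition det (u v : vec) : R := fst u * snd v - snd u * fst v.

Definition rational_dir (u : vec) : Prop :=
  unit_vec u /\ exists (p q : Z) (lam : R), (p <> 0%Z \/ q <> 0%Z) /\ 0 < lam /\
     u = (lam * IZR p, lam * IZR q).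

Definition ip (x : pt) (u : vec) : R := IZR (fst x) * fst u + IZR (snd x) * snd u.

Definition Hu (u : vec) (a : pt) : pt -> Prop := fun x => ip (psub x a) u < 0.

(* l_u^+ : origin plus sites of {<x,u> = 0} to the right of the origin looking
   in direction u (right = u rotated clockwise = (u2, -u1));
   l_u^- : origin plus sites to the left *)
Definition ell_plus (u : vec) : pt -> Prop :=
  fun x => ip x u = 0 /\ ip x (snd u, - fst u) >= 0.
Definition ell_minus (u : vec) : pt -> Prop :=
  fun x => ip x u = 0 /\ ip x (snd u, - fst u) <= 0.

Definition origin : pt := (0%Z, 0%Z).

Definition alpha_side (U : update_family) (ell : pt -> Prop) (u : vec) : option nat :=
  least (fun k => exists Z : list pt, NoDup Z /\ length Z = k /\
           infinite_set (fun x => closure U (fun y => Hu u origin y \/ In y Z) x /\ ell x)).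

Definition alpha_plus U u := alpha_side U (ell_plus u) u.
Definition alpha_minus U u := alpha_side U (ell_minus u) u.
Definition alpha_bar U u := omin (alpha_plus U u) (alpha_minus U u).
Definition alpha_dir U u : option nat :=
  match alpha_plus U u, alpha_minus U u with
  | Some _, Some _ => alpha_bar U u
  | _, _ => None
  end.

Definition semicircle_sup (U : update_family) (v : vec) : option nat :=
  least (fun k => forall u, rational_dir u -> dotR u v > 0 ->
                            ole (alpha_dir U u) (Some k)).

Definition alpha_U (U : update_family) : option nat :=
  least (fun k => exists v, unit_vec v /\ semicircle_sup U v = Some k).

Definition unbalanced_critical (U : update_family) : Prop :=
  exists a : nat, alpha_U U = Some a /\ (1 <= a)%nat /\
    ~ (exists v, unit_vec v /\
         forall u, rational_dir u -> dotR u v >= 0 -> ole (alpha_dir U u) (Some a)).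

Definition good_SU (U : update_family) (a : nat) (us ul ur : vec) : Prop :=
  rational_dir us /\ rational_dir ul /\ rational_dir ur /\
  det us ul * det us ur < 0 /\
  ole (Some (a + 1)%nat) (alpha_dir U us) /\
  ole (Some (a + 1)%nat) (alpha_dir U (vneg us)) /\
  omin (alpha_bar U ul) (alpha_bar U ur) = Some a.

Definition is_droplet (us ul ur : vec) (D : pt -> Prop) : Prop :=
  (exists a1 a2 a3 a4 : pt, forall x,
      D x <-> (Hu us a1 x /\ Hu (vneg us) a2 x /\ Hu ul a3 x /\ Hu ur a4 x)) /\
  (exists x, D x).

Definition nu (U : update_family) : R :=
  fold_right Rmax 0
    (map (fun X => fold_right Rmax 0
            (map (fun x => fold_right Rmax 0 (map (fun y => dist2 x y) (origin :: X)))
                 (origin :: X))) U).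
Definition kappa (U : update_family) : R := 3 * nu U.

Fixpoint kpath (U : update_family) (L : pt -> Prop) (x : pt) (p : list pt) (y : pt) : Prop :=
  match p with
  | [] => x = y
  | z :: p' => L z /\ dist2 x z <= kappa U /\ kpath U L z p' y
  end.
Definition strongly_connected (U : update_family) (L : pt -> Prop) : Prop :=
  forall x y, L x -> L y -> exists p, kpath U L x p y.

Definition internally_spanned (U : update_family) (us ul ur : vec)
    (A D : pt -> Prop) : Prop :=
  exists L : pt -> Prop,
    (forall x, L x -> closure U (fun y => D y /\ A y) x) /\
    strongly_connected U L /\
    is_droplet us ul ur D /\ (forall x, L x -> D x) /\
    (forall D', is_droplet us ul ur D' -> (forall x, L x -> D' x) ->
                forall x, D x -> D' x).

(* Main.v *)
Require Import Defs.
From Stdlib Require Import Reals List.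
From Stdlib Require Import Lra Lia ZArith Classical ClassicalEpsilon.
Import ListNotations.
Open Scope R_scope.

Lemma least_some (P : nat -> Prop) : (exists n, P n) ->
  exists m, least P = Some m /\ P m /\ forall k, P k -> (m <= k)%nat.
Proof.
  intro H. unfold least.
  destruct (excluded_middle_informative (exists n, P n)) as [H'|H']; [|contradiction].
  destruct (constructive_indefinite_description _ _) as [m [Pm Hm]]. simpl. eauto.
Qed.

Lemma least_zero (P : nat -> Prop) : P 0%nat -> least P = Some 0%nat.
Proof.
  intro H. destruct (least_some P) as [m [E [_ Hm]]]; [eauto|].
  rewrite E. specialize (Hm _ H). f_equal; lia.
Qed.

Lemma ip_padd x y u : ip (padd x y) u = ip x u + ip y u.
Proof. unfold ip, padd; simpl. rewrite !plus_IZR. ring. Qed.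

Lemma ip_psub x y u : ip (psub x y) u = ip x u - ip y u.
Proof. unfold ip, psub; simpl. rewrite !minus_IZR. ring. Qed.

Lemma Hu_iff u a x : Hu u a x <-> ip x u < ip a u.
Proof. unfold Hu. rewrite ip_psub. lra. Qed.

Lemma dist2_sym x y : dist2 x y = dist2 y x.
Proof. unfold dist2. f_equal. ring. Qed.

Lemma dist2_padd x y z : dist2 (padd x y) (padd x z) = dist2 y z.
Proof. unfold dist2, padd; simpl. rewrite !plus_IZR. f_equal. ring. Qed.

Lemma CS a b u1 u2 : u1^2 + u2^2 = 1 -> Rabs (a*u1 + b*u2) <= sqrt (a^2+b^2).
Proof.
  intro H. rewrite <- sqrt_Rsqr_abs. apply sqrt_le_1_alt. unfold Rsqr.
  assert (0 <= (a*u2 - b*u1)^2) by apply pow2_ge_0.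
  replace (a^2+b^2) with ((a^2+b^2)*(u1^2+u2^2)) by (rewrite H; ring).
  nra.
Qed.

Lemma ip_diff_le x y u : unit_vec u -> Rabs (ip x u - ip y u) <= dist2 x y.
Proof.
  unfold unit_vec, ip, dist2. intro H.
  replace (IZR (fst x) * fst u + IZR (snd x) * snd u - (IZR (fst y) * fst u + IZR (snd y) * snd u))
    with ((IZR (fst x) - IZR (fst y)) * fst u + (IZR (snd x) - IZR (snd y)) * snd u) by ring.
  apply CS; auto.
Qed.

Lemma sqrt_sum_le a b : sqrt (a^2+b^2) <= Rabs a + Rabs b.
Proof.
  rewrite <- (sqrt_Rsqr (Rabs a + Rabs b)) by (pose proof (Rabs_pos a); pose proof (Rabs_pos b); lra).
  apply sqrt_le_1_alt. unfold Rsqr.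
  pose proof (Rabs_pos a); pose proof (Rabs_pos b).
  assert (a^2 = Rabs a * Rabs a) by (rewrite <- Rabs_mult; simpl; rewrite Rmult_1_r; symmetry; apply Rabs_right; nra).
  assert (b^2 = Rabs b * Rabs b) by (rewrite <- Rabs_mult; simpl; rewrite Rmult_1_r; symmetry; apply Rabs_right; nra).
  nra.
Qed.

Lemma sqrt_ge_abs a b : Rabs a <= sqrt (a^2+b^2).
Proof. rewrite <- sqrt_Rsqr_abs. apply sqrt_le_1_alt. unfold Rsqr. nra. Qed.

Lemma fold_Rmax_ge {A} (f : A -> R) l z : In z l -> f z <= fold_right Rmax 0 (map f l).
Proof.
  induction l as [|w l IH]; simpl; [tauto|]. intros [->|H].
  - apply Rmax_l.
  - eapply Rle_trans; [apply IH; auto| apply Rmax_r].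
Qed.

Lemma fold_Rmax_nonneg {A} (f : A -> R) l : 0 <= fold_right Rmax 0 (map f l).
Proof. induction l; simpl; [lra|]. eapply Rle_trans; [apply IHl|apply Rmax_r]. Qed.

Definition Bnd (l : list pt) : Z :=
  fold_right (fun z acc => Z.abs (fst z) + Z.abs (snd z) + acc)%Z 0%Z l.

Lemma Bnd_ge l : (0 <= Bnd l)%Z /\ forall z, In z l -> (Z.abs (fst z) + Z.abs (snd z) <= Bnd l)%Z.
Proof.
  induction l as [|w l [IH0 IH]]; simpl; split; try lia.
  intros z [->|H]; [lia|]. specialize (IH z H). lia.
Qed.

Lemma line_pt_notin (p q : Z) (l : list pt) (s : bool) :
  (p <> 0 \/ q <> 0)%Z ->
  let k := (if s then Bnd l + 1 else - (Bnd l + 1))%Z in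
  ~ In ((k*q)%Z, (-(k*p))%Z) l.
Proof.
  intros Hpq k Hin. destruct (Bnd_ge l) as [H0 H]. specialize (H _ Hin). simpl in H.
  rewrite Z.abs_opp, !Z.abs_mul in H.
  assert (Z.abs k = Bnd l + 1)%Z by (unfold k; destruct s; lia).
  rewrite H1 in H. assert (1 <= Z.abs p + Z.abs q)%Z by lia. nia.
Qed.

Lemma stab_alpha U u : rational_dir u ->
  (exists X, In X U /\ forall y, In y X -> ip y u < 0) ->
  alpha_plus U u = Some 0%nat /\ alpha_minus U u = Some 0%nat.
Proof.
  intros [Hun [p [q [lam [Hpq [Hlam ->]]]]]] [X [HX HXn]].
  assert (Hcl : forall x, ip x (lam * IZR p, lam * IZR q) = 0 ->
            closure U (fun y => Hu (lam * IZR p, lam * IZR q) origin y \/ In y []) x).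
  { intros x Hx. exists 1%nat. simpl. right. exists X. split; auto.
    intros y Hy. left. apply Hu_iff. rewrite ip_padd, Hx.
    unfold ip at 2, origin; simpl. specialize (HXn y Hy). lra. }
  split; apply least_zero; exists []; (split; [constructor|split; [reflexivity|]]);
    intro l.
  - set (k := (Bnd l + 1)%Z). exists ((k*q)%Z, (-(k*p))%Z).
    assert (E : ip ((k*q)%Z, (-(k*p))%Z) (lam * IZR p, lam * IZR q) = 0).
    { unfold ip; simpl. rewrite !mult_IZR, opp_IZR, mult_IZR. ring. }
    split; [split; [apply Hcl; auto| unfold ell_plus; split; auto]|].
    + unfold ip; simpl. rewrite !mult_IZR, opp_IZR, mult_IZR.
      assert (0 <= IZR k) by (apply IZR_le; destruct (Bnd_ge l); unfold k; lia).
      assert (0 <= IZR p * IZR p + IZR q * IZR q) by nra.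
      replace (IZR k * IZR q * (lam * IZR q) + - (IZR k * IZR p) * - (lam * IZR p))
        with (IZR k * lam * (IZR p * IZR p + IZR q * IZR q)) by ring.
      apply Rle_ge. apply Rmult_le_pos; [apply Rmult_le_pos|]; lra.
    + exact (line_pt_notin p q l true Hpq).
  - set (k := (- (Bnd l + 1))%Z). exists ((k*q)%Z, (-(k*p))%Z).
    assert (E : ip ((k*q)%Z, (-(k*p))%Z) (lam * IZR p, lam * IZR q) = 0).
    { unfold ip; simpl. rewrite !mult_IZR, opp_IZR, mult_IZR. ring. }
    split; [split; [apply Hcl; auto| unfold ell_minus; split; auto]|].
    + unfold ip; simpl. rewrite !mult_IZR, opp_IZR, mult_IZR.
      assert (IZR k <= 0) by (apply IZR_le; destruct (Bnd_ge l); unfold k; lia).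
      assert (0 <= IZR p * IZR p + IZR q * IZR q) by nra.
      replace (IZR k * IZR q * (lam * IZR q) + - (IZR k * IZR p) * - (lam * IZR p))
        with (- ((- IZR k) * lam * (IZR p * IZR p + IZR q * IZR q))) by ring.
      cut (0 <= - IZR k * lam * (IZR p * IZR p + IZR q * IZR q)); [lra|].
      apply Rmult_le_pos; [apply Rmult_le_pos|]; lra.
    + exact (line_pt_notin p q l false Hpq).
Qed.

Lemma weights (us ul ur : vec) : unit_vec us -> det us ul * det us ur < 0 ->
  exists c1 c2 c3 c4, 0 < c1 /\ 0 < c2 /\ 0 < c3 /\ 0 < c4 /\
   forall x : pt, c1 * ip x us + c2 * ip x (vneg us) + c3 * ip x ul + c4 * ip x ur = 0.
Proof.
  destruct us as [s1 s2], ul as [l1 l2], ur as [r1 r2]. unfold unit_vec, det, vneg, ip; simpl.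
  intros Hu Hd. replace (s1 * (s1 * 1) + s2 * (s2 * 1)) with (s1^2+s2^2) in Hu by ring.
  set (b := s1 * l2 - s2 * l1) in *. set (d := s1 * r2 - s2 * r1) in *.
  set (c3 := Rabs d). set (c4 := Rabs b).
  set (v1 := c3 * l1 + c4 * r1). set (v2 := c3 * l2 + c4 * r2).
  assert (Hdet : s1 * v2 - s2 * v1 = 0).
  { replace (s1 * v2 - s2 * v1) with (c3 * b + c4 * d) by (unfold v1, v2, b, d; ring).
    unfold c3, c4. destruct (Rlt_dec 0 b).
    - assert (d < 0) by nra. rewrite (Rabs_left d), (Rabs_right b) by lra. ring.
    - assert (b <= 0) by lra. assert (b < 0) by (destruct (Req_dec b 0) as [E|E]; [rewrite E in Hd; lra|lra]). assert (0 < d) by nra.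
      rewrite (Rabs_left b), (Rabs_right d) by lra. ring. }
  set (m := v1 * s1 + v2 * s2).
  assert (E1 : v1 = m * s1).
  { assert (v1 - m*s1 = s2*(s2*v1 - s1*v2) + v1*(1 - (s1^2+s2^2))) by (unfold m; ring).
    rewrite Hu in H. replace (s2 * v1 - s1 * v2) with (- (s1*v2 - s2*v1)) in H by ring.
    rewrite Hdet in H. lra. }
  assert (E2 : v2 = m * s2).
  { assert (v2 - m*s2 = s1*(s1*v2 - s2*v1) + v2*(1 - (s1^2+s2^2))) by (unfold m; ring).
    rewrite Hu, Hdet in H. lra. }
  exists (1 + Rabs m - m), (1 + Rabs m), c3, c4.
  assert (b <> 0) by (intro E; rewrite E in Hd; lra).
  assert (d <> 0) by (intro E; rewrite E in Hd; lra).
  pose proof (Rle_abs m). pose proof (Rabs_pos m).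
  split; [lra|split; [lra|split; [unfold c3; apply Rabs_pos_lt; auto|split; [unfold c4; apply Rabs_pos_lt; auto|]]]].
  intro x.
  transitivity (IZR (fst x) * (v1 - m * s1) + IZR (snd x) * (v2 - m*s2)).
  - unfold v1, v2. ring.
  - rewrite <- E1, <- E2. ring.
Qed.

Lemma posdir (u : vec) : unit_vec u -> exists e : pt, 0 < ip e u.
Proof.
  destruct u as [u1 u2]; unfold unit_vec, ip; simpl. intro H.
  destruct (Rtotal_order u1 0) as [h|[h|h]].
  - exists ((-1)%Z, 0%Z). simpl. lra.
  - destruct (Rtotal_order u2 0) as [k|[k|k]].
    + exists (0%Z, (-1)%Z). simpl. lra.
    + subst. nra.
    + exists (0%Z, 1%Z). simpl. lra.
  - exists (1%Z, 0%Z). simpl. lra.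
Qed.

Definition pt_eq_dec : forall x y : pt, {x = y} + {x <> y}.
Proof. decide equality; apply Z.eq_dec. Defined.

Definition rangeZ (a : Z) (N : nat) : list Z :=
  map (fun k => (a - Z.of_nat N + Z.of_nat k)%Z) (seq 0 (2*N+1)).

Lemma rangeZ_in a N z : (Z.abs (z - a) <= Z.of_nat N)%Z -> In z (rangeZ a N).
Proof.
  intro H. unfold rangeZ. apply in_map_iff. exists (Z.to_nat (z - a + Z.of_nat N)).
  split; [lia|]. apply in_seq. lia.
Qed.

Lemma finite_enum (S : pt -> Prop) (p : pt) (N : nat) :
  (forall x, S x -> (Z.abs (fst x - fst p) <= Z.of_nat N)%Z /\ (Z.abs (snd x - snd p) <= Z.of_nat N)%Z) ->
  exists l, NoDup l /\ forall x, In x l <-> S x.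
Proof.
  intro H.
  set (l0 := list_prod (rangeZ (fst p) N) (rangeZ (snd p) N)).
  set (f := fun x => if excluded_middle_informative (S x) then true else false).
  exists (nodup pt_eq_dec (filter f l0)). split; [apply NoDup_nodup|].
  intro x. rewrite nodup_In, filter_In. unfold f.
  destruct (excluded_middle_informative (S x)) as [h|h]; split; try tauto.
  - intros _; split; auto. destruct x as [x1 x2]. destruct (H _ h) as [h1 h2]. apply in_prod; apply rangeZ_in; auto.
  - intros [_ E]; discriminate.
Qed.

Lemma card_eq (S : pt -> Prop) l : NoDup l -> (forall x, In x l <-> S x) ->
  card_set S = Some (length l).
Proof.
  intros Hn Hl. unfold card_set.
  destruct (least_some (fun k => exists l : list pt, NoDup l /\ length l = k /\ forall x, In x l <-> S x))
    as [m [E [[l' [Hn' [Hlen Hl']]] _]]]; [eauto|].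
  rewrite E. f_equal. subst m.
  apply Nat.le_antisymm; apply NoDup_incl_length; auto; intros x Hx;
   [apply Hl, Hl'|apply Hl', Hl]; auto.
Qed.

Lemma abs_le1 s1 s2 : s1^2 + s2^2 = 1 -> Rabs s1 <= 1.
Proof. intro H. apply Rabs_le. split; nra. Qed.

Lemma cramer s1 s2 l1 l2 V1 V2 a b B :
  s1^2+s2^2 = 1 -> l1^2+l2^2 = 1 -> a = V1*s1+V2*s2 -> b = V1*l1+V2*l2 ->
  Rabs a <= B -> Rabs b <= B ->
  sqrt (V1^2+V2^2) * Rabs (s1*l2 - s2*l1) <= 4*B.
Proof.
  intros Hs Hl Ha Hb HA HB.
  assert (h1 : Rabs s1 <= 1) by (eapply abs_le1; eauto).
  assert (h2 : Rabs s2 <= 1) by (eapply abs_le1; rewrite Rplus_comm; eauto).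
  assert (h3 : Rabs l1 <= 1) by (eapply abs_le1; eauto).
  assert (h4 : Rabs l2 <= 1) by (eapply abs_le1; rewrite Rplus_comm; eauto).
  assert (E1 : V1 * (s1*l2 - s2*l1) = a*l2 - b*s2) by (subst; ring).
  assert (E2 : V2 * (s1*l2 - s2*l1) = b*s1 - a*l1) by (subst; ring).
  assert (F1 : Rabs V1 * Rabs (s1*l2 - s2*l1) <= 2*B).
  { rewrite <- Rabs_mult, E1. eapply Rle_trans; [apply Rabs_triang|].
    rewrite Rabs_Ropp, !Rabs_mult.
    pose proof (Rabs_pos a); pose proof (Rabs_pos b); pose proof (Rabs_pos l2); pose proof (Rabs_pos s2).
    nra. }
  assert (F2 : Rabs V2 * Rabs (s1*l2 - s2*l1) <= 2*B).
  { rewrite <- Rabs_mult, E2. eapply Rle_trans; [apply Rabs_triang|].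
    rewrite Rabs_Ropp, !Rabs_mult.
    pose proof (Rabs_pos a); pose proof (Rabs_pos b); pose proof (Rabs_pos l1); pose proof (Rabs_pos s1).
    nra. }
  pose proof (sqrt_sum_le V1 V2). pose proof (Rabs_pos (s1*l2 - s2*l1)).
  apply Rle_trans with ((Rabs V1 + Rabs V2) * Rabs (s1*l2 - s2*l1)).
  - apply Rmult_le_compat_r; auto.
  - lra.
Qed.

Lemma ip_vneg x u : ip x (vneg u) = - ip x u.
Proof. unfold ip, vneg; simpl. ring. Qed.

Section Main.
Variable U : update_family.
Variables us ul ur : vec.
Variables c1 c2 c3 c4 : R.
Hypothesis hc1 : 0 < c1.
Hypothesis hc2 : 0 < c2.
Hypothesis hc3 : 0 < c3.
Hypothesis hc4 : 0 < c4.
Hypothesis hid : forall x : pt, c1 * ip x us + c2 * ip x (vneg us) + c3 * ip x ul + c4 * ip x ur = 0.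
Hypothesis hus : unit_vec us.
Hypothesis hul : unit_vec ul.
Hypothesis hur : unit_vec ur.
Hypothesis hbeta : det us ul <> 0.
Hypothesis hstab : forall u, (u = us \/ u = vneg us \/ u = ul \/ u = ur) ->
  forall X, In X U -> exists y, In y X /\ ip y u >= 0.
Variables e1 e2 e3 e4 : pt.
Hypothesis he1 : 0 < ip e1 us.
Hypothesis he2 : 0 < ip e2 (vneg us).
Hypothesis he3 : 0 < ip e3 ul.
Hypothesis he4 : 0 < ip e4 ur.

Record drop := mkd { d1 : pt; d2 : pt; d3 : pt; d4 : pt }.

Definition inD (d : drop) (x : pt) : Prop :=
  ip x us < ip (d1 d) us /\ ip x (vneg us) < ip (d2 d) (vneg us) /\
  ip x ul < ip (d3 d) ul /\ ip x ur < ip (d4 d) ur.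

Definition Pc (d : drop) : R :=
  c1 * ip (d1 d) us + c2 * ip (d2 d) (vneg us) + c3 * ip (d3 d) ul + c4 * ip (d4 d) ur.

Lemma hvs : unit_vec (vneg us).
Proof. unfold unit_vec, vneg; simpl. transitivity ((fst us)^2 + (snd us)^2); [ring|exact hus]. Qed.

Lemma Pc_pos d x : inD d x -> 0 < Pc d.
Proof.
  intros (h1 & h2 & h3 & h4). unfold Pc. pose proof (hid x).
  assert (c1 * ip x us < c1 * ip (d1 d) us) by (apply Rmult_lt_compat_l; auto).
  assert (c2 * ip x (vneg us) < c2 * ip (d2 d) (vneg us)) by (apply Rmult_lt_compat_l; auto).
  assert (c3 * ip x ul < c3 * ip (d3 d) ul) by (apply Rmult_lt_compat_l; auto).
  assert (c4 * ip x ur < c4 * ip (d4 d) ur) by (apply Rmult_lt_compat_l; auto).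
  lra.
Qed.

Definition Kc : R := 4 * (/c1 + /c2 + /c3) / Rabs (det us ul).

Lemma Kc_pos : 0 < Kc.
Proof.
  unfold Kc. apply Rdiv_lt_0_compat; [|apply Rabs_pos_lt; auto].
  assert (0 < /c1) by (apply Rinv_0_lt_compat; auto).
  assert (0 < /c2) by (apply Rinv_0_lt_compat; auto).
  assert (0 < /c3) by (apply Rinv_0_lt_compat; auto). lra.
Qed.

Lemma le_div (c s P : R) : 0 < c -> c * s <= P -> s <= P * / c.
Proof.
  intros hc h. replace s with ((c*s) * /c) by (field; lra).
  apply Rmult_le_compat_r; [left; apply Rinv_0_lt_compat; auto|auto].
Qed.

Lemma diam_bound d x y : inD d x -> inD d y -> dist2 x y <= Kc * Pc d.
Proof.
  unfold Kc. intros (x1 & x2 & x3 & x4) (y1 & y2 & y3 & y4).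
  set (s1 := ip (d1 d) us - ip y us). set (s2 := ip (d2 d) (vneg us) - ip y (vneg us)).
  set (s3 := ip (d3 d) ul - ip y ul). set (s4 := ip (d4 d) ur - ip y ur).
  assert (HP : c1*s1 + c2*s2 + c3*s3 + c4*s4 = Pc d).
  { unfold s1, s2, s3, s4, Pc. pose proof (hid y). lra. }
  assert (0 < c1*s1) by (apply Rmult_lt_0_compat; unfold s1; lra).
  assert (0 < c2*s2) by (apply Rmult_lt_0_compat; unfold s2; lra).
  assert (0 < c3*s3) by (apply Rmult_lt_0_compat; unfold s3; lra).
  assert (0 < c4*s4) by (apply Rmult_lt_0_compat; unfold s4; lra).
  set (a := ip x us - ip y us). set (b := ip x ul - ip y ul).
  set (a2 := ip x (vneg us) - ip y (vneg us)). set (b4 := ip x ur - ip y ur).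
  assert (Hsum : c1*a + c2*a2 + c3*b + c4*b4 = 0).
  { unfold a, a2, b, b4. pose proof (hid x). pose proof (hid y). lra. }
  assert (Ea2 : a2 = - a) by (unfold a2, a; rewrite !ip_vneg; ring).
  set (P := Pc d) in *.
  assert (q1 : s1 <= P * /c1) by (apply le_div; auto; lra).
  assert (q2 : s2 <= P * /c2) by (apply le_div; auto; lra).
  assert (q3 : s3 <= P * /c3) by (apply le_div; auto; lra).
  assert (ha1 : a < s1) by (unfold a, s1; lra).
  assert (ha2 : a2 < s2) by (unfold a2, s2; lra).
  assert (hb3 : b < s3) by (unfold b, s3; lra).
  assert (hb4 : b4 < s4) by (unfold b4, s4; lra).
  assert (r1 : c1*a < c1*s1) by (apply Rmult_lt_compat_l; auto).
  assert (r2 : c2*a2 < c2*s2) by (apply Rmult_lt_compat_l; auto).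
  assert (r4 : c4*b4 < c4*s4) by (apply Rmult_lt_compat_l; auto).
  assert (hb' : c3 * (-b) <= P) by lra.
  assert (q3' : - b <= P * /c3) by (apply le_div; auto).
  assert (0 < /c1) by (apply Rinv_0_lt_compat; auto).
  assert (0 < /c2) by (apply Rinv_0_lt_compat; auto).
  assert (0 < /c3) by (apply Rinv_0_lt_compat; auto).
  assert (0 < P) by (eapply Pc_pos; repeat split; eauto).
  set (B := P * (/c1 + /c2 + /c3)).
  assert (HA : Rabs a <= B).
  { apply Rabs_le. unfold B. split; nra. }
  assert (HB : Rabs b <= B).
  { apply Rabs_le. unfold B. split; nra. }
  destruct us as [u1 u2], ul as [l1 l2].
  pose proof (cramer u1 u2 l1 l2 (IZR (fst x) - IZR (fst y)) (IZR (snd x) - IZR (snd y)) a b B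
     hus hul) as C.
  assert (Hdet : 0 < Rabs (det (u1,u2) (l1,l2))) by (apply Rabs_pos_lt; auto).
  unfold det in Hdet; simpl in Hdet.
  assert (Cr : dist2 x y * Rabs (u1*l2 - u2*l1) <= 4*B).
  { apply C; auto; [unfold a, ip; simpl; ring| unfold b, ip; simpl; ring]. }
  unfold det; simpl.
  apply Rmult_le_reg_r with (Rabs (u1 * l2 - u2 * l1)); auto.
  replace (4 * (/ c1 + / c2 + / c3) / Rabs (u1 * l2 - u2 * l1) * P * Rabs (u1 * l2 - u2 * l1))
    with (4 * B) by (unfold B; field; lra).
  auto.
Qed.


Definition pick (u : vec) (a b : pt) : pt := if Rle_dec (ip a u) (ip b u) then b else a.

Lemma pick_max u a b : ip (pick u a b) u = Rmax (ip a u) (ip b u).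
Proof.
  unfold pick, Rmax. destruct (Rle_dec (ip a u) (ip b u)); auto.
Qed.

Definition merge (d d' : drop) : drop :=
  mkd (pick us (d1 d) (d1 d')) (pick (vneg us) (d2 d) (d2 d'))
      (pick ul (d3 d) (d3 d')) (pick ur (d4 d) (d4 d')).

Lemma merge_incl d d' x : inD d x \/ inD d' x -> inD (merge d d') x.
Proof.
  unfold inD, merge; simpl. rewrite !pick_max.
  intros [(h1&h2&h3&h4)|(h1&h2&h3&h4)]; repeat split;
   (eapply Rlt_le_trans; [eassumption|]); first [apply Rmax_l|apply Rmax_r].
Qed.

Definition Mk : R := (c1 + c2 + c3 + c4) * kappa U.

Lemma max_help t t' px py D : px < t -> py < t' -> Rabs (px - py) <= D ->
  Rmax t t' <= t + t' - px + D.
Proof.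
  intros h1 h2 h3. pose proof (Rle_abs (px - py)). pose proof (Rle_abs (- (px - py))). rewrite Rabs_Ropp in *.
  unfold Rmax. destruct (Rle_dec t t'); lra.
Qed.

Lemma merge_cost d d' x y : inD d x -> inD d' y -> dist2 x y <= kappa U ->
  Pc (merge d d') <= Pc d + Pc d' + Mk.
Proof.
  intros (x1&x2&x3&x4) (y1&y2&y3&y4) hd. unfold Pc, merge, Mk; simpl. rewrite !pick_max.
  set (D := dist2 x y) in *.
  pose proof (max_help _ _ _ _ D x1 y1 (ip_diff_le x y us hus)) as m1.
  pose proof (max_help _ _ _ _ D x2 y2 (ip_diff_le x y (vneg us) hvs)) as m2.
  pose proof (max_help _ _ _ _ D x3 y3 (ip_diff_le x y ul hul)) as m3.
  pose proof (max_help _ _ _ _ D x4 y4 (ip_diff_le x y ur hur)) as m4.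
  apply (Rmult_le_compat_l c1) in m1; [|lra].
  apply (Rmult_le_compat_l c2) in m2; [|lra].
  apply (Rmult_le_compat_l c3) in m3; [|lra].
  apply (Rmult_le_compat_l c4) in m4; [|lra].
  pose proof (hid x).
  assert ((c1+c2+c3+c4) * D <= (c1+c2+c3+c4) * kappa U) by (apply Rmult_le_compat_l; lra).
  lra.
Qed.

Definition init (z : pt) : drop := mkd (padd z e1) (padd z e2) (padd z e3) (padd z e4).
Definition P0 : R := c1 * ip e1 us + c2 * ip e2 (vneg us) + c3 * ip e3 ul + c4 * ip e4 ur.

Lemma init_in z : inD (init z) z.
Proof. unfold inD, init; simpl. rewrite !ip_padd. repeat split; lra. Qed.

Lemma init_cost z : Pc (init z) = P0.
Proof. unfold Pc, init, P0; simpl. rewrite !ip_padd. pose proof (hid z). lra. Qed.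

Lemma P0_pos : 0 < P0.
Proof.
  unfold P0.
  assert (0 < c1 * ip e1 us) by (apply Rmult_lt_0_compat; auto).
  assert (0 < c2 * ip e2 (vneg us)) by (apply Rmult_lt_0_compat; auto).
  assert (0 < c3 * ip e3 ul) by (apply Rmult_lt_0_compat; auto).
  assert (0 < c4 * ip e4 ur) by (apply Rmult_lt_0_compat; auto). lra.
Qed.

Lemma kappa_nonneg : 0 <= kappa U.
Proof. unfold kappa, nu. pose proof (fold_Rmax_nonneg (fun X => fold_right Rmax 0
            (map (fun x => fold_right Rmax 0 (map (fun y => dist2 x y) (origin :: X)))
                 (origin :: X))) U). lra. Qed.

Lemma Mk_nonneg : 0 <= Mk.
Proof. unfold Mk. pose proof kappa_nonneg. apply Rmult_le_pos; lra. Qed.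

Lemma nu_bound X y z : In X U -> In y X -> In z X -> dist2 y z <= kappa U.
Proof.
  intros HX Hy Hz. unfold kappa.
  assert (dist2 y z <= nu U); [|pose proof kappa_nonneg; unfold kappa in *; lra].
  unfold nu.
  set (h := fun x : pt => fold_right Rmax 0 (map (fun w => dist2 x w) (origin :: X))).
  assert (A1 : dist2 y z <= h y).
  { apply (fold_Rmax_ge (fun w => dist2 y w) (origin :: X) z). right; auto. }
  assert (A2 : h y <= fold_right Rmax 0 (map h (origin :: X))).
  { apply (fold_Rmax_ge h (origin :: X) y). right; auto. }
  pose proof (fold_Rmax_ge (fun X0 : list pt => fold_right Rmax 0
      (map (fun x : pt => fold_right Rmax 0 (map (fun w => dist2 x w) (origin :: X0))) (origin :: X0))) U X HX) as A3.
  cbv beta in A3. fold h in A3. lra.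
Qed.

Lemma closed_dir u t x X : (u = us \/ u = vneg us \/ u = ul \/ u = ur) -> In X U ->
  (forall y, In y X -> ip (padd x y) u < t) -> ip x u < t.
Proof.
  intros Hu HX H. destruct (hstab u Hu X HX) as [y [Hy Hy']].
  specialize (H y Hy). rewrite ip_padd in H. lra.
Qed.

Lemma inD_closed d x X : In X U -> (forall y, In y X -> inD d (padd x y)) -> inD d x.
Proof.
  intros HX H. unfold inD. repeat split; (eapply closed_dir; [|exact HX|]);
    [tauto| |tauto| |tauto| |tauto|]; intros y Hy; apply H in Hy; unfold inD in Hy; tauto.
Qed.

Lemma X_nonempty X : In X U -> exists y, In y X.
Proof. intro HX. destruct (hstab us (or_introl eq_refl) X HX) as [y [Hy _]]. eauto. Qed.

Definition far (d d' : drop) : Prop := forall x y, inD d x -> inD d' y -> kappa U < dist2 x y.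

Fixpoint sep (F : list drop) : Prop :=
  match F with [] => True | d :: F' => (forall d', In d' F' -> far d d') /\ sep F' end.

Definition inU (F : list drop) (x : pt) : Prop := exists d, In d F /\ inD d x.

Definition cost (F : list drop) : R := fold_right (fun d acc => Pc d + Mk + acc) 0 F.

Definition nonemp (F : list drop) : Prop := forall d, In d F -> exists x, inD d x.

Lemma sep_same F d d' x y : sep F -> In d F -> In d' F -> inD d x -> inD d' y ->
  dist2 x y <= kappa U -> inD d y.
Proof.
  induction F as [|a F IH]; simpl; [tauto|].
  intros [Hf Hs] [<-|Hd] [<-|Hd'] hx hy hxy; auto.
  all: first [ exfalso; specialize (Hf d' Hd' x y hx hy); lra
             | exfalso; specialize (Hf d Hd y x hy hx); rewrite dist2_sym in Hf; lra
             | eapply IH; eauto ].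
Qed.

Lemma sep_remove F1 d F2 : sep (F1 ++ d :: F2) -> sep (F1 ++ F2).
Proof.
  induction F1 as [|a F1 IH]; simpl; [tauto|].
  intros [Hf Hs]. split; auto. intros d' Hd'. apply Hf.
  apply in_app_or in Hd'. apply in_or_app. simpl. tauto.
Qed.

Lemma cost_app F1 F2 : cost (F1 ++ F2) = cost F1 + cost F2.
Proof. induction F1; simpl; [ring|]. rewrite IHF1. ring. Qed.

Lemma insert_lemma n : forall F E, (length F <= n)%nat -> sep F -> nonemp F -> (exists x, inD E x) ->
  exists F', sep F' /\ nonemp F' /\ (forall x, inD E x \/ inU F x -> inU F' x) /\
             cost F' <= cost F + Pc E + Mk.
Proof.
  induction n as [|n IH]; intros F E Hlen Hs Hne HE.
  - destruct F; [|simpl in Hlen; lia].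
    exists [E]. simpl. split; [split; [tauto|auto]|]. split.
    + intros d [<-|[]]; auto.
    + split; [|lra]. intros x [h|[d [[] _]]]. exists E; simpl; auto.
  - destruct (classic (exists d, In d F /\ ~ far E d)) as [[d [Hd Hnf]]|Hno].
    + destruct (In_split _ _ Hd) as [F1 [F2 ->]].
      unfold far in Hnf. apply not_all_ex_not in Hnf as [x Hnf].
      apply not_all_ex_not in Hnf as [y Hnf].
      apply imply_to_and in Hnf as [hx Hnf]. apply imply_to_and in Hnf as [hy Hnf].
      apply Rnot_lt_le in Hnf.
      destruct (IH (F1 ++ F2) (merge E d)) as [F' (H1 & H2 & H3 & H4)].
      * rewrite length_app in *; simpl in Hlen; lia.
      * eapply sep_remove; eauto.
      * intros d' Hd'. apply Hne. apply in_app_or in Hd'; apply in_or_app; simpl; tauto.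
      * exists x. apply merge_incl; auto.
      * exists F'. split; auto. split; auto. split.
        -- intros z [hz|[d' [Hd' hz]]].
           ++ apply H3. left. apply merge_incl; auto.
           ++ apply in_app_or in Hd'. destruct Hd' as [Hd'|[<-|Hd']].
              ** apply H3. right. exists d'. split; auto. apply in_or_app; auto.
              ** apply H3. left. apply merge_incl; auto.
              ** apply H3. right. exists d'. split; auto. apply in_or_app; auto.
        -- pose proof (merge_cost E d x y hx hy Hnf).
           rewrite cost_app in *. simpl. lra.
    + exists (E :: F). simpl. split; [split; auto|].
      * intros d' Hd'. apply NNPP. intro hf. apply Hno. eauto.
      * split; [intros d [<-|Hd]; auto|]. split; [|lra].
        intros x [h|[d [Hd h]]]; [exists E|exists d]; simpl; auto.
Qed.

Lemma cost_cons d F : cost (d :: F) = Pc d + Mk + cost F.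
Proof. reflexivity. Qed.

Lemma cost_nonneg F : nonemp F -> 0 <= cost F.
Proof.
  induction F as [|d F IH]; [unfold cost; simpl; lra|]. rewrite cost_cons. intro Hne.
  destruct (Hne d (or_introl eq_refl)) as [x hx]. pose proof (Pc_pos d x hx).
  pose proof Mk_nonneg.
  assert (0 <= cost F) by (apply IH; intros d' h; apply Hne; right; auto). lra.
Qed.

Lemma cost_elem F d : nonemp F -> In d F -> Pc d + Mk <= cost F.
Proof.
  induction F as [|a F IH]; [simpl; tauto|]. rewrite cost_cons. intros Hne [<-|Hd].
  - assert (0 <= cost F) by (apply cost_nonneg; intros d' h; apply Hne; right; auto). lra.
  - destruct (Hne a (or_introl eq_refl)) as [x hx]. pose proof (Pc_pos a x hx).
    pose proof Mk_nonneg.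
    assert (Pc d + Mk <= cost F) by (apply IH; auto; intros d' h; apply Hne; right; auto). lra.
Qed.

Lemma build (S : list pt) : exists F, sep F /\ nonemp F /\ (forall z, In z S -> inU F z) /\
  cost F <= (P0 + Mk) * INR (length S).
Proof.
  induction S as [|z S [F (H1&H2&H3&H4)]].
  - exists []. simpl. split; auto. split; [intros d []|]. split; [intros z []|]. lra.
  - destruct (insert_lemma (length F) F (init z) (le_n _) H1 H2) as [F' (G1&G2&G3&G4)].
    { exists z. apply init_in. }
    exists F'. split; auto. split; auto. split.
    + intros w [<-|hw]; apply G3; [left; apply init_in|right; auto].
    + rewrite init_cost in G4. simpl length. rewrite S_INR. lra.
Qed.

Lemma closure_in F (S : pt -> Prop) : sep F -> (forall z, S z -> inU F z) ->
  forall x, closure U S x -> inU F x.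
Proof.
  intros Hs HS x [t Ht]. revert x Ht. induction t as [|t IH]; simpl; intros x Ht; auto.
  destruct Ht as [Ht|[X [HX HXy]]]; auto.
  destruct (X_nonempty X HX) as [y0 Hy0].
  destruct (IH _ (HXy y0 Hy0)) as [d0 [Hd0 h0]].
  exists d0. split; auto. apply (inD_closed d0 x X HX).
  intros y Hy. destruct (IH _ (HXy y Hy)) as [d [Hd h]].
  eapply (sep_same F d0 d); eauto.
  rewrite dist2_padd. eapply nu_bound; eauto.
Qed.

Lemma path_in F (L : pt -> Prop) d : sep F -> (forall z, L z -> inU F z) -> In d F ->
  forall p x y, inD d x -> kpath U L x p y -> inD d y.
Proof.
  intros Hs HL Hd p. induction p as [|z p IH]; simpl; intros x y hx Hp.
  - subst; auto.
  - destruct Hp as [Lz [hz Hp]]. apply (IH z); auto.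
    destruct (HL z Lz) as [d' [Hd' h']]. eapply (sep_same F d d'); eauto.
Qed.


Lemma inD_droplet d : (exists x, inD d x) -> is_droplet us ul ur (inD d).
Proof.
  intro H. split; auto. exists (d1 d), (d2 d), (d3 d), (d4 d). intro x.
  unfold inD. rewrite !Hu_iff. tauto.
Qed.

Lemma box_bound (D : pt -> Prop) (p : pt) (R0 : R) :
  (forall x, D x -> dist2 x p <= R0) ->
  forall x, D x -> (Z.abs (fst x - fst p) <= Z.of_nat (Z.to_nat (up R0)))%Z /\
                   (Z.abs (snd x - snd p) <= Z.of_nat (Z.to_nat (up R0)))%Z.
Proof.
  intros H x Hx. specialize (H x Hx). unfold dist2 in H.
  destruct (archimed R0) as [Hup _].
  pose proof (sqrt_ge_abs (IZR (fst x) - IZR (fst p)) (IZR (snd x) - IZR (snd p))) as A1.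
  pose proof (sqrt_ge_abs (IZR (snd x) - IZR (snd p)) (IZR (fst x) - IZR (fst p))) as A2.
  rewrite Rplus_comm in A2.
  assert (E1 : Rabs (IZR (fst x) - IZR (fst p)) = IZR (Z.abs (fst x - fst p)))
    by (rewrite abs_IZR, minus_IZR; auto).
  assert (E2 : Rabs (IZR (snd x) - IZR (snd p)) = IZR (Z.abs (snd x - snd p)))
    by (rewrite abs_IZR, minus_IZR; auto).
  rewrite E1 in A1. rewrite E2 in A2.
  assert (Z.abs (fst x - fst p) < up R0)%Z by (apply lt_IZR; lra).
  assert (Z.abs (snd x - snd p) < up R0)%Z by (apply lt_IZR; lra).
  split; lia.
Qed.

Theorem sec_main : exists c : R, 0 < c /\
  forall (A D : pt -> Prop), internally_spanned U us ul ur A D ->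
    exists n : nat, card_set (fun x => D x /\ A x) = Some n /\
      forall x y, D x -> D y -> c * dist2 x y <= INR n.
Proof.
  pose proof Kc_pos. pose proof P0_pos. pose proof Mk_nonneg.
  assert (HK : 0 < Kc * (P0 + Mk)) by (apply Rmult_lt_0_compat; lra).
  exists (/ (Kc * (P0 + Mk))). split; [apply Rinv_0_lt_compat; auto|].
  intros A D [L (HLcl & Hsc & [[a1 [a2 [a3 [a4 Hrep]]]] [p Hp]] & HLD & Hmin)].
  set (dD := mkd a1 a2 a3 a4).
  assert (HD : forall x, D x -> inD dD x).
  { intros x Hx. apply Hrep in Hx. unfold inD, dD; simpl. rewrite !Hu_iff in Hx. tauto. }
  destruct (finite_enum (fun x => D x /\ A x) p (Z.to_nat (up (Kc * Pc dD)))) as [l [Hnd Hl]].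
  { intros x [Hx _]. apply (box_bound D p); auto. intros z Hz.
    apply diam_bound; auto. }
  exists (length l). split; [apply card_eq; auto|].
  destruct (build l) as [F (G1 & G2 & G3 & G4)].
  assert (HSF : forall z, D z /\ A z -> inU F z) by (intros z hz; apply G3, Hl, hz).
  assert (HLF : forall z, L z -> inU F z).
  { intros z hz. apply (closure_in F (fun y => D y /\ A y)); auto. }
  destruct (classic (exists l0, L l0)) as [[l0 Hl0]|Hno].
  2:{ exfalso. set (q := psub p e1).
      assert (Hd' : is_droplet us ul ur (inD (init q))).
      { apply inD_droplet. exists q. apply init_in. }
      pose proof (Hmin _ Hd' (fun x hx => False_ind _ (Hno (ex_intro _ x hx))) p Hp) as [h _].
      unfold init, q in h; simpl in h. rewrite ip_padd, ip_psub in h. lra. }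
  destruct (HLF l0 Hl0) as [d0 [Hd0 h0]].
  assert (HL0 : forall z, L z -> inD d0 z).
  { intros z hz. destruct (Hsc l0 z Hl0 hz) as [pth Hp']. eapply path_in; eauto. }
  assert (HDd0 : forall x, D x -> inD d0 x).
  { apply Hmin; auto. apply inD_droplet. eauto. }
  pose proof (cost_elem F d0 G2 Hd0).
  intros x y hx hy.
  assert (dist2 x y <= Kc * (P0 + Mk) * INR (length l)).
  { eapply Rle_trans; [apply diam_bound; apply HDd0; eauto|].
    rewrite Rmult_assoc. apply Rmult_le_compat_l; lra. }
  apply (Rmult_le_reg_l (Kc * (P0 + Mk))); auto.
  rewrite <- Rmult_assoc, Rinv_r by lra. lra.
Qed.

End Main.

Lemma rational_vneg u : rational_dir u -> rational_dir (vneg u).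
Proof.
  intros [Hu [p [q [lam [Hpq [Hl ->]]]]]]. split.
  - unfold unit_vec, vneg in *; simpl in *. transitivity ((lam * IZR p)^2 + (lam * IZR q)^2); [ring|auto].
  - exists (-p)%Z, (-q)%Z, lam. split; [lia|split; auto]. unfold vneg; simpl.
    rewrite !opp_IZR. f_equal; ring.
Qed.

Lemma stab_of U u : rational_dir u ->
  ~ (alpha_plus U u = Some 0%nat /\ alpha_minus U u = Some 0%nat) ->
  forall X, In X U -> exists y, In y X /\ ip y u >= 0.
Proof.
  intros Hr Hn X HX. apply NNPP. intro H. apply Hn. apply stab_alpha; auto.
  exists X. split; auto. intros y Hy. apply Rnot_ge_lt. intro h. apply H. eauto.
Qed.

Theorem mainTheorem10 :
  forall (U : update_family) (a : nat) (us ul ur : vec),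
    is_update_family U ->
    unbalanced_critical U ->
    alpha_U U = Some a ->
    good_SU U a us ul ur ->
    exists c : R, 0 < c /\
      forall (A D : pt -> Prop),
        internally_spanned U us ul ur A D ->
        exists n : nat, card_set (fun x => D x /\ A x) = Some n /\
          (* |D ∩ A| >= c * diam(D) *)
          forall x y, D x -> D y -> c * dist2 x y <= INR n.
Proof.
  intros U a us ul ur _ [a' [Ha' [Ha1 _]]] Ha (Rs & Rl & Rr & Hdet & Hs1 & Hs2 & Hlr).
  rewrite Ha in Ha'. injection Ha' as <-.
  pose proof (rational_vneg us Rs) as Rvs.
  assert (hbeta : det us ul <> 0) by (intro E; rewrite E in Hdet; lra).
  destruct (weights us ul ur (proj1 Rs) Hdet) as (c1 & c2 & c3 & c4 & h1 & h2 & h3 & h4 & hid).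
  destruct (posdir us (proj1 Rs)) as [e1 he1].
  destruct (posdir (vneg us) (proj1 Rvs)) as [e2 he2].
  destruct (posdir ul (proj1 Rl)) as [e3 he3].
  destruct (posdir ur (proj1 Rr)) as [e4 he4].
  assert (hstab : forall u, (u = us \/ u = vneg us \/ u = ul \/ u = ur) ->
    forall X, In X U -> exists y, In y X /\ ip y u >= 0).
  { intros u Hu. destruct Hu as [Hu|[Hu|[Hu|Hu]]]; subst u; apply stab_of; auto;
      intros [E1 E2].
    - revert Hs1. unfold alpha_dir, alpha_bar. rewrite E1, E2. simpl. lia.
    - revert Hs2. unfold alpha_dir, alpha_bar. rewrite E1, E2. simpl. lia.
    - revert Hlr. unfold alpha_bar at 1. rewrite E1, E2. simpl.
      destruct (alpha_bar U ur); simpl; intro E; injection E; lia.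
    - revert Hlr. unfold alpha_bar at 2. rewrite E1, E2. simpl.
      destruct (alpha_bar U ul) as [k|]; simpl; intro E; injection E; lia. }
  exact (sec_main U us ul ur c1 c2 c3 c4 h1 h2 h3 h4 hid (proj1 Rs) (proj1 Rl) (proj1 Rr)
           hbeta hstab e1 e2 e3 e4 he1 he2 he3 he4).
Qed.
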